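(* Let $N$ be a finite set and let $s:2^N\to\mathbb{R}$ be a set function whose type-4 Fourier support is $\mathrm{supp}(\widehat{s})=\{B\subseteq N:\widehat{s}^{(4)}_B\neq 0\}=\{B_1,\dots,B_k\}=\mathcal{B}$ (with $B_1,\dots,B_k$ distinct). Let $\mathcal{A}=\{N\setminus B_1,\dots,N\setminus B_k\}$. Let $F^{-1}$ denote the $2^{|N|}\times 2^{|N|}$ matrix $[\mathbb{1}_{A\cap B=\emptyset}]_{A,B\subseteq N}$ (row index $A$, column index $B$), and let $T=(F^{-1})_{\mathcal{A}\mathcal{B}}$ be its submatrix with rows in $\mathcal{A}$ and columns in $\mathcal{B}$. Then $T$ is invertible and $$\mathbf{s}=\big((F^{-1})_{2^N\mathcal{B}}\,T^{-1}\big)\,\mathbf{s}_{\mathcal{A}},$$ where $\mathbf{s}=(s_A)_{A\subseteq N}$, $\mathbf{s}_{\mathcal{A}}=(s_A)_{A\in\mathcal{A}}$, and $(F^{-1})_{2^N\mathcal{B}}$ is the submatrix of $F^{-1}$ consisting of the columns indexed by $\mathcal{B}$.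
   Context: The type-4 discrete set Fourier transform of $s$ is $\widehat{s}^{(4)}_B=\sum_{A\subseteq N,\,A\cup B=N}(-1)^{|A\cap B|}s_A$ for $B\subseteq N$; its inverse is $s_A=\sum_{B\subseteq N,\,A\cap B=\emptyset}\widehat{s}^{(4)}_B$, i.e., $F^{-1}=[\mathbb{1}_{A\cap B=\emptyset}]_{A,B}$ is the inverse of the type-4 transform matrix. Here $\mathbb{1}_P$ is $1$ if $P$ holds and $0$ otherwise. *)

(* Defs.v *)
From mathcomp Require Import all_boot all_order all_algebra.
Set Implicit Arguments. Unset Strict Implicit. Unset Printing Implicit Defensive.
Import GRing.Theory Num.Theory.
Local Open Scope ring_scope.

Definition fourier4 (R : ringType) (N : finType) (s : {set N} -> R)
  (B : {set N}) : R :=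
  \sum_(A : {set N} | A :|: B == [set: N]) (-1) ^+ #|A :&: B| * s A.

Definition Finv_entry (R : ringType) (N : finType) (A B : {set N}) : R :=
  (A :&: B == set0)%:R.

(* Subsets of N indexed by 'I_#|{set N}| via enum_val (a fixed enumeration of 2^N). *)
Notation nsub N := #|{: {set N}}|.

Definition Finv_cols (R : ringType) (N : finType) (k : nat)
  (B : 'I_k -> {set N}) : 'M[R]_(nsub N, k) :=
  \matrix_(a < nsub N, j < k) Finv_entry R (enum_val a) (B j).

Definition Tmat (R : ringType) (N : finType) (k : nat)
  (B : 'I_k -> {set N}) : 'M[R]_k :=
  \matrix_(i < k, j < k) Finv_entry R (~: B i) (B j).

Definition svec (R : ringType) (N : finType) (s : {set N} -> R) : 'cV[R]_(nsub N) :=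
  \col_(a < nsub N) s (enum_val a).

Definition svecA (R : ringType) (N : finType) (k : nat) (s : {set N} -> R)
  (B : 'I_k -> {set N}) : 'cV[R]_k :=
  \col_(i < k) s (~: B i).

(* Main.v *)
Require Import Defs.
From mathcomp Require Import all_boot all_order all_algebra.
From mathcomp Require Import lra.
Import GRing.Theory Num.Theory.
Local Open Scope ring_scope.

Section S.
Variables (R : realFieldType) (N : finType).

Definition hh (A C X : {set N}) : R :=
  (A :&: X == set0)%:R * (C :|: X == setT)%:R * (-1) ^+ #|C :&: X|.

Lemma hflip (A C Y : {set N}) c : c \in C -> c \notin A -> c \notin Y ->
  hh A C (c |: Y) = - hh A C Y.
Proof.
move=> cC cA cY; rewrite /hh.
have -> : (A :&: (c |: Y) == set0) = (A :&: Y == set0).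
  rewrite setIUr; have -> : A :&: [set c] = set0.
    by apply/setP=> x; rewrite !inE; apply/andP=> -[xA /eqP ex]; subst; rewrite xA in cA.
  by rewrite set0U.
have -> : C :|: (c |: Y) = C :|: Y.
  by rewrite setUCA; apply/setUidPr; rewrite sub1set inE cC.
have -> : #|C :&: (c |: Y)| = #|C :&: Y|.+1.
  rewrite setIUr (setIidPr _); last by rewrite sub1set.
  by rewrite cardsU1 inE (negbTE cY) andbF.
by rewrite exprS mulN1r mulrN.
Qed.

Lemma g_eq (A C : {set N}) : \sum_X hh A C X = (C == A)%:R.
Proof.
case: (eqVneq C A) => [->|nCA].
  rewrite (bigD1 (~: A)) //= big1 ?addr0.
    by rewrite /hh setICr setUCr !eqxx cards0 expr0 !mulr1.
  move=> X nX; rewrite /hh.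
  case: (eqVneq (A :&: X) set0) => [h1|]; last by rewrite !mul0r.
  case: (eqVneq (A :|: X) setT) => [h2|]; last by rewrite mulr0 mul0r.
  exfalso; move/eqP: nX; apply; apply/setP=> x.
  move/setP: h1 => /(_ x); move/setP: h2 => /(_ x); rewrite !inE.
  by case: (x \in A); case: (x \in X).
have [sAC|nsAC] := boolP (A \subset C); last first.
  rewrite big1 // => X _; rewrite /hh.
  case: (eqVneq (A :&: X) set0) => [h1|]; last by rewrite !mul0r.
  case: (eqVneq (C :|: X) setT) => [h2|]; last by rewrite mulr0 mul0r.
  exfalso; move/negP: nsAC; apply; apply/subsetP=> x xA.
  move/setP: h1 => /(_ x); move/setP: h2 => /(_ x); rewrite !inE xA /=.
  by case: (x \in C); case: (x \in X).
have : A \proper C by rewrite properEneq eq_sym nCA.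
case/properP=> _ [c cC cA].
pose sg (X : {set N}) := if c \in X then X :\ c else c |: X.
have sgK : involutive sg.
  move=> X; rewrite /sg; case cX: (c \in X).
    have cY : (c \in X :\ c) = false by rewrite !inE eqxx.
    by rewrite cY setD1K.
  by rewrite setU11 setU1K // cX.
have fl : forall X, hh A C (sg X) = - hh A C X.
  move=> X; rewrite /sg; case: ifP => cX.
    have cY : c \notin X :\ c by rewrite !inE eqxx.
    by rewrite -{2}(setD1K cX) hflip // opprK.
  by rewrite hflip // cX.
have e : \sum_X hh A C X = \sum_X hh A C (sg X).
  exact: (reindex_inj (inv_inj sgK)).
rewrite (eq_bigr _ (fun X _ => fl X)) sumrN in e.
move: e; set S := (\sum_X _) => e.
have : S *+ 2 = 0 by rewrite mulr2n {1}e addNr.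
by move/eqP; rewrite mulrn_eq0 /= => /eqP.
Qed.

Lemma inv4 (s : {set N} -> R) (A : {set N}) :
  s A = \sum_X Finv_entry R A X * fourier4 s X.
Proof.
rewrite /fourier4 /Finv_entry.
under eq_bigr => X _ do rewrite big_distrr big_mkcond /=.
rewrite exchange_big /=.
rewrite (eq_bigr (fun C => (C == A)%:R * s C)); last first.
  move=> C _; transitivity (\sum_X hh A C X * s C).
    apply: eq_bigr => X _; rewrite /hh; case: ifP => _; rewrite ?mulr0 ?mul0r ?mulr1 ?mulrA //.
  by rewrite -big_distrl g_eq.
rewrite (bigD1 A) //= eqxx mul1r big1 ?addr0 // => C /negbTE ->.
by rewrite mul0r.
Qed.

Lemma key (s : {set N} -> R) (k : nat) (B : 'I_k -> {set N}) :
  injective B ->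
  (forall X : {set N}, fourier4 s X != 0 <-> exists i : 'I_k, X = B i) ->
  forall A, s A = \sum_j Finv_entry R A (B j) * fourier4 s (B j).
Proof.
move=> inj hyp A.
rewrite (inv4 s A) (bigID (fun X => X \in B @: setT)) /=.
rewrite [X in _ + X]big1 ?addr0; last first.
  move=> X nX; suff -> : fourier4 s X = 0 by rewrite mulr0.
  case: (eqVneq (fourier4 s X) 0) => // /hyp [i ei]; exfalso; move/negP: nX; apply.
  by rewrite ei; apply: imset_f.
rewrite big_imset /=; last by move=> i j _ _ /inj.
by apply: eq_bigl => i; rewrite inE.
Qed.
End S.

Theorem theorem4 (R : realFieldType) (N : finType) (s : {set N} -> R)
  (k : nat) (B : 'I_k -> {set N}) :
  injective B ->
  (forall X : {set N}, fourier4 s X != 0 <-> exists i : 'I_k, X = B i) ->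
  Tmat R B \in unitmx /\
  svec s = (Finv_cols R B *m invmx (Tmat R B)) *m svecA s B.
Proof.
move=> inj hyp.
have kk := @key R N s k B inj hyp.
set T := Tmat R B.
have uT : T \in unitmx.
  rewrite unitmxE unitfE; apply/det0P => -[v nv vT0].
  case: (pickP (fun i => v 0 i != 0)) => [i0 hi0|h0]; last first.
    move/eqP: nv; apply; apply/matrixP => a b.
    by rewrite ord1 mxE; apply/eqP; move/negbT: (h0 b); rewrite negbK.
  case: (@arg_maxnP _ i0 (fun i => v 0 i != 0) (fun i => #|B i|) hi0) => im vim mx.
  have := congr1 (fun M : 'rV[R]_k => M 0 im) vT0; rewrite !mxE (bigD1 im) //= big1.
    rewrite /T mxE /Finv_entry (setIC _ (B im)) setICr eqxx mulr1 addr0 => /eqP.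
    by rewrite (negbTE vim).
  move=> j njm; rewrite mxE /Finv_entry.
  case: (eqVneq (v 0 j) 0) => [->|vj]; first by rewrite mul0r.
  suff -> : (~: B j :&: B im == set0) = false by rewrite mulr0.
  apply/negP => H.
  have sub : B im \subset B j by rewrite -setD_eq0 setDE setIC.
  have : B im == B j by rewrite eqEcard sub; apply: mx.
  by move/eqP/inj => e; rewrite e eqxx in njm.
pose hv := \col_j fourier4 s (B j).
have h1 : svecA s B = T *m hv.
  apply/matrixP => i a; rewrite !mxE (kk (~: B i)).
  by apply: eq_bigr => j _; rewrite !mxE.
have h2 : svec s = Finv_cols R B *m hv.
  apply/matrixP => i a; rewrite !mxE (kk (enum_val i)).
  by apply: eq_bigr => j _; rewrite !mxE.
split=> //.
by rewrite h1 -mulmxA mulKmx.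
Qed.
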